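(* Let $l\ge2$ and $a,b\in\mathbb{Z}_{2l}$ be such that $X=X(\mathbb{Z}_{2l},\{\pm a,\pm b\})$ is a connected $4$-regular circulant graph, and assume $a+b=l$. If $l\equiv0\pmod4$, then $X$ does not admit perfect state transfer between (distinct) vertex type states.
   Context: For $S\subseteq\mathbb{Z}_n\setminus\{0\}$ with $S=-S$, $X(\mathbb{Z}_n,S)$ has vertex set $\mathbb{Z}_n$ and edges $\{x,y\}$ with $y-x\in S$. For a graph with symmetric arc set $\mathcal{A}$ ($t((x,y))=y$, $(x,y)^{-1}=(y,x)$): boundary matrix $d_{x,a}=\frac{1}{\sqrt{\deg x}}\delta_{x,t(a)}$, shift matrix $R_{a,b}=\delta_{a,b^{-1}}$, $U=R(2d^*d-I_{\mathcal{A}})$; $d^*e_x$ ($e_x$ the standard unit vector) is a vertex type state. Perfect state transfer from $\Phi$ to a distinct state $\Psi$ means $U^\tau\Phi=\gamma\Psi$ for some $\tau\in\mathbb{Z}_{\ge1}$ and $|\gamma|=1$. *)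

(* Defs.v *)
From HB Require Import structures.
From mathcomp Require Import all_boot all_order all_algebra.
Set Implicit Arguments. Unset Strict Implicit. Unset Printing Implicit Defensive.
Import Order.TTheory GRing.Theory Num.Theory.
Local Open Scope ring_scope.

Definition cadj (n : nat) (S : {set 'Z_n}) : rel 'Z_n :=
  fun x y => (y - x) \in S.

Definition cdeg (n : nat) (S : {set 'Z_n}) (x : 'Z_n) : nat :=
  #|[set y | cadj S x y]|.

Definition cconnected (n : nat) (S : {set 'Z_n}) : bool :=
  [forall x, [forall y, connect (cadj S) x y]].

Definition arc (n : nat) (S : {set 'Z_n}) := {e : 'Z_n * 'Z_n | cadj S e.1 e.2}.

Definition arc_t (n : nat) (S : {set 'Z_n}) (e : arc S) : 'Z_n := (val e).2.

(* (x,y)^{-1} = (y,x); insubd falls back to e only if (y,x) is not an arc,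
   which never happens when S = -S. *)
Definition arc_inv (n : nat) (S : {set 'Z_n}) (e : arc S) : arc S :=
  insubd e ((val e).2, (val e).1).

Section Walk.
Variables (C : numClosedFieldType) (n : nat) (S : {set 'Z_n}).

Definition bd (x : 'Z_n) (e : arc S) : C :=
  (arc_t e == x)%:R / sqrtC (cdeg S x)%:R.

Definition dmul (g : arc S -> C) : 'Z_n -> C :=
  fun x => \sum_(e : arc S) bd x e * g e.

Definition dstar (f : 'Z_n -> C) : arc S -> C :=
  fun e => \sum_(x : 'Z_n) (bd x e)^* * f x.

Definition shiftR (g : arc S -> C) : arc S -> C :=
  fun e => g (arc_inv e).

Definition Uop (g : arc S -> C) : arc S -> C :=
  shiftR (fun e => 2 * dstar (dmul g) e - g e).

Definition vstate (x : 'Z_n) : arc S -> C :=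
  dstar (fun y => (y == x)%:R).

Definition PST (Phi Psi : arc S -> C) : Prop :=
  exists (tau : nat), (1 <= tau)%N /\
    exists gamma : C, `|gamma| = 1 /\
      forall e, iter tau Uop Phi e = gamma * Psi e.

End Walk.

(* Main.v *)
Require Import Defs.
From HB Require Import structures.
From mathcomp Require Import all_boot all_order all_algebra ring zify.
Import Order.TTheory GRing.Theory Num.Theory.
Local Open Scope ring_scope.

Lemma big_sig_cond (C : numClosedFieldType) (T : finType) (P Q : pred T) (F : T -> C) :
  \sum_(x : {x : T | P x} | Q (val x)) F (val x) = \sum_(x | P x && Q x) F x.
Proof.
symmetry; rewrite (reindex_omap (val : {x | P x} -> T) insub); last first.
  by move=> i /andP[Pi _]; rewrite insubT.
by apply: eq_bigl=> -[i iA]/=; rewrite insubT iA eqxx andbT.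
Qed.
Lemma aux_mod (k l : nat) : (0 < l -> (k*2) %% (l.*2) = 0 -> k < l.*2 -> k = 0 \/ k = l)%N.
Proof.
move=> l0 h hk.
have : (l %| k)%N.
  by rewrite -(@dvdn_pmul2r 2) // muln2 /dvdn h.
case/dvdnP=> m km; subst k.
have : (m < 2)%N by nia.
by case: m {h hk} => [|[|m]] // _; [left|right; rewrite mul1n].
Qed.

Section Main.
Variables (C : numClosedFieldType) (l : nat) (a b : 'Z_(l.*2)).
Hypothesis hl : (2 <= l)%N.
Hypothesis huniq : uniq [:: a; -a; b; -b].
Hypothesis hab : a + b = l%:R.

Local Notation Z := 'Z_(l.*2).
Local Notation S := [set a; -a; b; -b].
Local Notation L := (l%:R : Z).

Lemma n_gt1 : (1 < l.*2)%N.
Proof. by rewrite -addnn; apply: (leq_trans _ (leq_addr _ _)); apply: leq_trans hl. Qed.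

Lemma L2 : L *+ 2 = 0.
Proof. by rewrite -mulrnA muln2 pchar_Zp // n_gt1. Qed.

Lemma memS s : (s \in S) = [|| s == a, s == -a, s == b | s == -b].
Proof. by rewrite !inE -!orbA. Qed.

Lemma SN s : s \in S -> - s \in S.
Proof. by rewrite memS => /or4P[]/eqP->; rewrite memS ?opprK eqxx ?orbT. Qed.

Lemma cdeg4 x : cdeg S x = 4%N.
Proof.
rewrite /cdeg.
have -> : [set y | cadj S x y] = [set s + x | s in S].
  apply/setP=> y; rewrite inE /cadj; apply/idP/imsetP.
    by move=> h; exists (y - x) => //; rewrite subrK.
  by case=> s sS ->; rewrite addrK.
rewrite card_imset; last exact: addIr.
have -> : #|S| = #|[:: a; -a; b; -b]|.
  by apply: eq_card => s; rewrite memS !inE.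
by rewrite (card_uniqP huniq).
Qed.


Lemma arc_invE (e : Defs.arc S) : val (arc_inv e) = ((val e).2, (val e).1).
Proof.
rewrite /arc_inv insubdK //; rewrite unfold_in /cadj /= -opprB; apply: SN.
exact: (valP e).
Qed.

Lemma two_neq0 : (2 : C) != 0.
Proof. by rewrite pnatr_eq0. Qed.

Lemma sqrt4 : sqrtC (4%:R : C) = 2.
Proof. by rewrite -(sqrCK (ler0n C 2)) expr2 -natrM. Qed.

Lemma dstarE (f : Z -> C) (e : Defs.arc S) : dstar f e = f (arc_t e) / 2.
Proof.
rewrite /dstar (bigD1 (arc_t e)) //= big1 ?addr0 => [|x xn].
  by rewrite /bd cdeg4 sqrt4 eqxx fmorph_div !rmorph_nat mul1r mulrC.
by rewrite /bd eq_sym (negbTE xn) mul0r rmorph0 mul0r.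
Qed.

Lemma dmulE (g : Defs.arc S -> C) x : dmul g x = (\sum_(e | arc_t e == x) g e) / 2.
Proof.
rewrite /dmul [in RHS]big_mkcond mulr_suml; apply: eq_bigr => e _.
by rewrite /bd cdeg4 sqrt4; case: eqP => _; rewrite ?mul1r ?mul0r // mulrC.
Qed.

Lemma UopE (g : Defs.arc S -> C) e :
  Uop g e = (\sum_(e' | arc_t e' == (val e).1) g e') / 2 - g (arc_inv e).
Proof.
rewrite /Uop /shiftR dstarE dmulE /arc_t arc_invE /=.
by congr (_ - _); field.
Qed.

Lemma inner (G : Z -> Z -> C) u w :
  \sum_(v | cadj S w v && (v == u)) G w v = (cadj S w u)%:R * G w u.
Proof.
rewrite big_mkcond (bigD1 u) //= big1 ?addr0 => [|v /negbTE ->]; last by rewrite andbF.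
by rewrite eqxx andbT; case: (cadj S w u); rewrite ?mul1r ?mul0r.
Qed.

Lemma sum_in (G : Z -> Z -> C) u :
  \sum_(e : Defs.arc S | arc_t e == u) G (val e).1 (val e).2 =
  G (u - a) u + G (u + a) u + G (u - b) u + G (u + b) u.
Proof.
rewrite /arc_t (@big_sig_cond C _ (fun p : Z * Z => cadj S p.1 p.2) (fun p => p.2 == u)
   (fun p => G p.1 p.2)).
rewrite -(pair_big_dep predT (fun w v => cadj S w v && (v == u)) G).
under eq_bigr => w _ do rewrite inner.
rewrite (reindex_inj (@subrI _ u)) /=.
under eq_bigr => s _ do rewrite /cadj subKr.
rewrite (eq_bigr (fun s => if s \in S then G (u - s) u else 0)); last by move=> s _; case: (s \in S); rewrite ?mul1r ?mul0r.
rewrite -big_mkcond /=.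
rewrite (eq_bigl (fun s => s \in [:: a; -a; b; -b])); last by move=> s; rewrite memS !inE.
rewrite -big_uniq // !big_cons big_nil /=.
by rewrite addr0 !opprK !addrA.
Qed.

Lemma Lneg : - L = L.
Proof. by apply/eqP; rewrite eq_sym -subr_eq0 opprK -mulr2n L2. Qed.

Lemma twice0 z : (z *+ 2 == 0) = (z == 0) || (z == L).
Proof.
apply/idP/idP; last by case/orP => /eqP ->; rewrite ?mul0rn ?L2.
move/eqP => h.
have hz : z = (z : nat)%:R :> Z by rewrite natr_Zp.
have hk : ((z : nat) < l.*2)%N by apply: (leq_trans (ltn_ord z)); rewrite (Zp_cast n_gt1).
move: h; rewrite {1}hz -mulrnA => h.
have {}h : ((z * 2) %% l.*2 = 0)%N by rewrite -(val_Zp_nat n_gt1) h.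
have l0 : (0 < l)%N by apply: leq_trans hl.
by case: (@aux_mod _ _ l0 h hk : _ \/ _) => hv; rewrite hz hv eqxx ?orbT.
Qed.

Lemma L_neq0 : L != 0.
Proof.
apply/eqP => h.
have := val_Zp_nat n_gt1 l; rewrite h /= modn_small.
  by move=> h0; move: hl; rewrite -h0.
by rewrite -addnn -[X in (X < _)%N]addn0 ltn_add2l; apply: leq_trans hl.
Qed.

Lemma b2 : b *+ 2 = - (a *+ 2).
Proof. by apply/eqP; rewrite -addr_eq0 -mulrnDl addrC hab L2. Qed.

Lemma hLa : L - a = b.
Proof. by rewrite -hab addrC addKr. Qed.

Lemma hLb : L - b = a.
Proof. by rewrite -hab addrK. Qed.

Lemma pair1 w : w - a + L = w + b.
Proof. by rewrite -addrA (addrC (-a)) hLa. Qed.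

Lemma pair2 w : w + a + L = w - b.
Proof. by rewrite -addrA -{1}hLb addrAC -mulr2n L2 add0r. Qed.

Lemma pair3 w : w - b + L = w + a.
Proof. by rewrite -addrA (addrC (-b)) hLb. Qed.

Lemma pair4 w : w + b + L = w - a.
Proof. by rewrite -addrA -{1}hLa addrAC -mulr2n L2 add0r. Qed.

Lemma S2 s : s \in S -> (s *+ 2 == a *+ 2) || (s *+ 2 == - (a *+ 2)).
Proof.
by rewrite memS => /or4P[]/eqP->; rewrite ?mulNrn ?b2 ?opprK eqxx ?orbT.
Qed.

Variable x : Z.

Fixpoint ed (t : nat) : C * C :=
  if t is t'.+1 then (- (ed t').2, (ed t').1) else (1, 0).

Definition chi (z w : Z) : C := (w == z)%:R.

Definition symb t (w u : Z) := (u - x) *+ 2 == ((u - w) *+ 2) *+ t.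

Definition W t (w u : Z) : C :=
  4^-1 * (symb t w u)%:R +
  4^-1 * ((ed t).1 * (chi x u - chi (x + L) u) + (ed t).2 * (chi x w - chi (x + L) w)).

Lemma chixp v : chi (x + L) v = chi x (v + L).
Proof.
rewrite /chi; suff -> : (v == x + L) = (v + L == x) by [].
apply/idP/idP => /eqP h; apply/eqP.
  by rewrite h -addrA -mulr2n L2 addr0.
by rewrite -h -addrA -mulr2n L2 addr0.
Qed.

Lemma xL : (x == x + L) = false.
Proof.
apply/negbTE; rewrite -subr_eq0 opprD addrA subrr add0r oppr_eq0; exact: L_neq0.
Qed.

Lemma base (e : Defs.arc S) : vstate C x e = W 0 (val e).1 (val e).2.
Proof.
rewrite /vstate dstarE /W /= /symb mulr0n twice0 subr_eq0 subr_eq /chi /arc_t (addrC L x).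
case: (eqVneq (val e).2 x) => [->|ne].
  by rewrite xL /=; field.
by rewrite /=; field.
Qed.

Lemma symb_l t w s : symb t (w - s) w = ((w - x) *+ 2 == (s *+ 2) *+ t).
Proof. by rewrite /symb subKr. Qed.

Lemma symb_r t w s : symb t (w + s) w = ((w - x) *+ 2 == ((- s) *+ 2) *+ t).
Proof. by rewrite /symb opprD addrA subrr add0r. Qed.

Lemma symb_S t w u : symb t.+1 w u = ((w - x) *+ 2 == ((u - w) *+ 2) *+ t).
Proof.
rewrite /symb (mulrS _ t).
have -> : u - x = (u - w) + (w - x) by rewrite addrA subrK.
by rewrite mulrnDl (inj_eq (addrI _)).
Qed.

Lemma step t (g : Defs.arc S -> C) :
  (forall e, g e = W t (val e).1 (val e).2) ->
  forall e, Uop g e = W t.+1 (val e).1 (val e).2.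
Proof.
move=> IH e.
rewrite UopE (eq_bigr (fun e' => W t (val e').1 (val e').2)); last by move=> e' _; exact: IH.
rewrite sum_in IH arc_invE /=.
have hu : (val e).2 - (val e).1 \in S := valP e.
move: hu; set w := (val e).1; set u := (val e).2 => hu.
rewrite /W !chixp !pair1 !pair2 !pair3 !pair4 !symb_l !symb_r symb_S.
rewrite [symb t u w]/symb.
have -> : w - u = - (u - w) by rewrite opprB.
rewrite !mulNrn ?opprK b2 ?mulNrn ?opprK.
set P := (_ == a *+ 2 *+ t). set Q := (_ == a *+ 2 *- t).
case/orP: (S2 _ hu) => /eqP ->; rewrite ?mulNrn ?opprK /= -/P -/Q; clearbody w u P Q; field; rewrite ?pnatr_eq0 //.
Qed.

Lemma invariant t e : iter t (@Uop C _ S) (vstate C x) e = W t (val e).1 (val e).2.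
Proof.
elim: t e => [|t IH] e; first exact: base.
by rewrite iterS; apply: step.
Qed.

Lemma ed_cases t :
  [\/ ed t = (1, 0) /\ (t %% 4 = 0)%N, ed t = (0, 1) /\ (t %% 4 = 1)%N,
       ed t = (-1, 0) /\ (t %% 4 = 2)%N | ed t = (0, -1) /\ (t %% 4 = 3)%N].
Proof.
elim: t => [|t IH]; first by constructor 1.
case: IH => -[h hm]; rewrite /= h /=.
- by constructor 2; split; [rewrite oppr0 | lia].
- by constructor 3; split; [ | lia].
- by constructor 4; split; [rewrite oppr0 | lia].
- by constructor 1; split; [rewrite opprK | lia].
Qed.

End Main.


Theorem lemma8p2 (C : numClosedFieldType) (l : nat) (a b : 'Z_(l.*2)) :
  (2 <= l)%N ->
  0 \notin [set a; - a; b; - b] ->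
  #|[set a; - a; b; - b]| = 4%N ->
  cconnected [set a; - a; b; - b] ->
  a + b = l%:R ->
  (l %% 4 = 0)%N ->
  ~ exists x y : 'Z_(l.*2), x != y /\
      PST (@vstate C _ [set a; - a; b; - b] x) (@vstate C _ [set a; - a; b; - b] y).
Proof.
move=> hl _ hcard hconn hab hl4 [x [y [nxy [tau [htau [g [hg H]]]]]]].
have huniq : uniq [:: a; -a; b; -b].
  apply/card_uniqP; rewrite /= -hcard; apply: eq_card => s.
  by rewrite (memS l a b s) !inE.
pose S := [set a; - a; b; - b].
have c1 : cadj S (y - a) y by rewrite /cadj subKr (memS l a b) eqxx.
have c2 : cadj S (y + b) y.
  by rewrite /cadj opprD addrA subrr add0r (memS l a b) eqxx !orbT.
pose e1 := exist (fun p : 'Z_(l.*2) * 'Z_(l.*2) => cadj S p.1 p.2) (y - a, y) c1.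
pose e2 := exist (fun p : 'Z_(l.*2) * 'Z_(l.*2) => cadj S p.1 p.2) (y + b, y) c2.
have H1 := H e1; have H2 := H e2.
rewrite (@invariant C l a b hl huniq hab) /vstate (@dstarE C l a b huniq) /arc_t /= in H1.
rewrite (@invariant C l a b hl huniq hab) /vstate (@dstarE C l a b huniq) /arc_t /= in H2.
rewrite /W (symb_l l x tau) !(@chixp C l hl) (@pair1 l a b hab) /chi (eq_sym y x) (negbTE nxy) eqxx in H1.
rewrite /W (symb_r l x tau) mulNrn (@b2 l a b hl hab) opprK !(@chixp C l hl) (@pair4 l a b hl hab) /chi (eq_sym y x) (negbTE nxy) eqxx in H2.
set P := (_ == a *+ 2 *+ tau) in H1 H2.
set q := (y + l%:R == x) in H1 H2.
have hg2 : 2 * g = P%:R - (ed C tau).1 * q%:R.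
  transitivity (2 * (g * (true%:R / 2) + g * (true%:R / 2))); first by rewrite /=; field.
  rewrite -{1}H1 -H2 /=; field; by rewrite ?pnatr_eq0.
have hn : `|P%:R - (ed C tau).1 * q%:R| = 2.
  by rewrite -hg2 normrM hg mulr1 normr_nat.
clear H1 H2 hg2.
have hP : P /\ q /\ (tau %% 4 = 2)%N.
  case: (@ed_cases C l a b hl huniq tau) => -[he hm]; rewrite he /= in hn;
  case: P hn; case: q => /= hn //; try by [];
  move: hn; rewrite ?mul1r ?mul0r ?mulN1r ?subrr ?subr0 ?sub0r ?opprK ?addr0 ?add0r ?normrN ?normr0 ?normr1;
  move/eqP; rewrite eq_sym ?pnatr_eq0 ?pnatr_eq1 //.
case: hP => hP [hq hm].
have ha : a *+ 2 *+ tau = 0.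
  move/eqP: hP => <-; move/eqP: hq => hq.
  by rewrite -hq opprD addrA subrr add0r mulNrn (@L2 l hl) oppr0.
pose pr := [pred z : 'Z_(l.*2) | z *+ 2 *+ tau == 0].
have key : forall z s, s \in S -> ((z + s) *+ 2 *+ tau == 0) = (z *+ 2 *+ tau == 0).
  move=> z s hs; rewrite -!mulrnA mulrnDl !mulrnA.
  by case/orP: (@S2 l a b hl hab _ hs) => /eqP ->; rewrite ?mulNrn ha ?oppr0 addr0.
have cl : closed (cadj S) pr.
  move=> z z' hz; have := key z _ hz; rewrite [z + _]addrC subrK => h.
  by rewrite !inE h.
have h01 : connect (cadj S) 0 1 by move/forallP: hconn => /(_ 0) /forallP /(_ 1).
have := closed_connect cl h01; rewrite !inE !mul0rn eqxx => /esym/eqP h1.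
have {}h1 : ((2 * tau)%:R : 'Z_(l.*2)) = 0 by rewrite mulrnA; exact: h1.
have := val_Zp_nat (@n_gt1 l hl) (2 * tau); rewrite h1 /= => h2.
have h3 : (l.*2 %| 2 * tau)%N by rewrite /dvdn -h2.
rewrite -muln2 (mulnC 2 tau) dvdn_pmul2r // in h3.
have h4 : (4 %| l)%N by rewrite /dvdn hl4.
by move: (dvdn_trans h4 h3); rewrite /dvdn hm.
Qed.
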